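(* Let $N,j,k,m$ be integers. Work with a variable $q^{1/8}$, set $v=q^{1/2}$, $\{n\}=v^n-v^{-n}$, $A(a,k)=\{a-k\}\{a+k\}$ and $t_{j,N}=i^{N-1-j}q^{(N+j)^2/8}$. Then: (1) $A(N-j,k)-A(N+j,k)-2\{2j\}\{N\}\{N-1\}/\{1\}$ is divisible by $\{N\}^2$ in $\mathbb Z[v^{\pm1}]$; (2) $\{N-j\}=-\{N+j\}+\{N\}(v^j+v^{-j})$; (3) there exists $Q\in\mathbb Q[v^{\pm1}]$ such that $t_{-j,N}^m=t_{j,N}^m+\frac{mj}{2}\,t_{j,N}^m\{N\}+t_{j,N}^m(v^N+1)^2Q$.
   Context: All quantities are Laurent polynomials in $q^{1/8}$ with coefficients in $\mathbb Q(i)$; $\{2j\}/\{1\}\in\mathbb Z[v^{\pm1}]$, so the expression in (1) lies in $\mathbb Z[v^{\pm1}]$. *)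

(* Defs.v *)
From HB Require Import structures.
From mathcomp Require Import all_boot all_order all_algebra all_field.
Set Implicit Arguments. Unset Strict Implicit. Unset Printing Implicit Defensive.
Import Order.TTheory GRing.Theory Num.Theory.
Local Open Scope ring_scope.

(* Ambient ring: Laurent polynomials in x = q^(1/8) with complex-algebraic
   coefficients (containing Q(i)), embedded in the fraction field
   {fraction {poly algC}}; x is the class of 'X. *)
Definition K : fieldType := {fraction {poly algC}}.

Definition x8 : K := tofrac ('X : {poly algC}).

Definition v : K := x8 ^+ 4.

Definition br (n : int) : K := v ^ n - v ^ (- n).

Definition AA (a k : int) : K := br (a - k) * br (a + k).

Definition tt (j N : int) : K :=
  (tofrac (('i : algC)%:P)) ^ (N - 1 - j) * x8 ^ ((N + j) ^+ 2).

(* f lies in S[v^{+-1}]: f = p(v) / v^n for a polynomial p with coefficients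
   in S and some n : nat. *)
Definition laurent_v (S : {pred algC}) (f : K) : Prop :=
  exists (n : nat) (p : {poly algC}),
    p \is a polyOver S /\ f = tofrac (p \Po 'X^4) / v ^+ n.

Definition intC : {pred algC} := fun c => c \is a Num.int.
Definition ratC : {pred algC} := Crat.

(* Main.v *)
Require Import Defs.
From HB Require Import structures.
From mathcomp Require Import all_boot all_order all_algebra all_field.
From mathcomp Require Import ring.
Import Order.TTheory GRing.Theory Num.Theory.
Local Open Scope ring_scope.

Fact intC_subring : GRing.subring_closed intC.
Proof.
split.
- rewrite unfold_in /intC /=; by rewrite -[1]/(1%:~R) intr_int.
- move=> a b ha hb. have ha' : a \is a Num.int := ha. have hb' : b \is a Num.int := hb.
  change (a - b \is a Num.int). by rewrite rpredB.
- move=> a b ha hb. have ha' : a \is a Num.int := ha. have hb' : b \is a Num.int := hb.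
  change (a * b \is a Num.int). by rewrite rpredM.
Qed.
HB.instance Definition _ := GRing.isSubringClosed.Build algC intC intC_subring.

Lemma x8_neq0 : x8 != 0.
Proof. by rewrite /x8 tofrac_eq0 polyX_eq0. Qed.

Lemma v_neq0 : v != 0.
Proof. by rewrite /v expf_neq0 // x8_neq0. Qed.

Local Notation phi p := (tofrac (p \Po 'X^4) : K).

Lemma phiM p q : phi (p * q) = phi p * phi q.
Proof. by rewrite comp_polyM tofracM. Qed.
Lemma phiD p q : phi (p + q) = phi p + phi q.
Proof. by rewrite comp_polyD tofracD. Qed.
Lemma phiN p : phi (- p) = - phi p.
Proof. by rewrite -sub0r comp_polyB comp_poly0 tofracB tofrac0 sub0r. Qed.
Lemma phiXn n : phi 'X^n = v ^+ n.
Proof. by rewrite comp_Xn_poly -exprM tofracXn /v -exprM. Qed.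

Section Laur.
Variable S : subringClosed algC.
Definition Lv (f : K) := laurent_v S f.

Lemma Lv_mul f g : Lv f -> Lv g -> Lv (f * g).
Proof.
move=> [n [p [Hp ->]]] [m [q [Hq ->]]]; exists (n + m)%N, (p * q); split.
  by rewrite rpredM.
by rewrite phiM exprD mulf_div.
Qed.

Lemma Lv_add f g : Lv f -> Lv g -> Lv (f + g).
Proof.
move=> [n [p [Hp ->]]] [m [q [Hq ->]]]; exists (n + m)%N, (p * 'X^m + q * 'X^n); split.
  apply: rpredD; apply: rpredM => //; apply: rpredX; exact: polyOverX.
have vn : forall k, v ^+ k != 0 by move=> k; rewrite expf_neq0 // v_neq0.
by rewrite phiD !phiM !phiXn exprD (addf_div _ _ (vn n) (vn m)).
Qed.

Lemma Lv_opp f : Lv f -> Lv (- f).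
Proof.
move=> [n [p [Hp ->]]]; exists n, (- p); split; first by rewrite rpredN.
by rewrite phiN mulNr.
Qed.

Lemma Lv_const c : c \in S -> Lv (tofrac (c%:P)).
Proof.
move=> Hc; exists 0%N, c%:P; split; first by rewrite polyOverC.
by rewrite comp_polyC expr0 divr1.
Qed.

Lemma Lv_vz z : Lv (v ^ z).
Proof.
case: z => n.
  exists 0%N, 'X^n; split; first by apply: rpredX; exact: polyOverX.
  by rewrite phiXn expr0 divr1.
exists n.+1, 1; split; first by rewrite rpred1.
by rewrite comp_polyC tofrac1 div1r NegzE -invr_expz.
Qed.

Lemma Lv_sub f g : Lv f -> Lv g -> Lv (f - g).
Proof. by move=> ? ?; apply: Lv_add => //; apply: Lv_opp. Qed.

Lemma Lv0 : Lv 0.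
Proof. by rewrite -tofrac0 -polyC0; apply: Lv_const; rewrite rpred0. Qed.
Lemma Lv1 : Lv 1.
Proof. by rewrite -tofrac1 -polyC1; apply: Lv_const; rewrite rpred1. Qed.
End Laur.
Lemma vD a b : v ^ (a + b) = v ^ a * v ^ b.
Proof. exact: expfzDr v_neq0. Qed.
Lemma vN a : v ^ (- a) = (v ^ a)^-1.
Proof. by rewrite invr_expz. Qed.
Lemma vz_neq0 a : v ^ a != 0.
Proof. by rewrite expfz_neq0 // v_neq0. Qed.

Lemma p2gen (F : fieldType) (a b : F) : b != 0 -> a != 0 -> a / b - a^-1 * b = - (a * b) + a^-1 / b + (a - a^-1) * (b + b^-1).
Proof. move=> ha hb. field. by rewrite ha hb. Qed.

Lemma part2 N j : br (N - j) = - br (N + j) + br N * (v ^ j + v ^ (- j)).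
Proof.
rewrite /br !opprD !opprK !vD !vN.
exact: p2gen (vz_neq0 _) (vz_neq0 _).
Qed.
Lemma brn n : br (2 * n%:Z) = (v^+n)^+2 - ((v^+n)^+2)^-1.
Proof. rewrite /br -PoszM vN -exprnP mulnC exprM. reflexivity. Qed.

Lemma br1E : br 1 = v - v^-1.
Proof. by rewrite /br vN expr1z. Qed.

Lemma gstep {F : fieldType} {w u G : F} : w != 0 -> u != 0 ->
  w ^+ 2 - (w ^+ 2)^-1 = (u - u^-1) * G ->
  (u * w) ^+ 2 - ((u * w) ^+ 2)^-1 = (u - u^-1) * (u ^+ 2 * G + (w ^+ 2)^-1 * (u + u^-1)).
Proof.
move=> hw hu H. rewrite mulrDr mulrCA -H. field. by apply/andP.
Qed.

Lemma brG_nat (n : nat) : exists G, laurent_v intC G /\ br (2 * n%:Z) = br 1 * G.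
Proof.
elim: n => [|n [G [HG H]]].
  exists 0; split; first exact: Lv0.
  by rewrite !mulr0 /br oppr0 subrr.
exists (v ^ 2 * G + v ^ (- (2 * n%:Z)) * (v ^ 1 + v ^ (-1))); split.
  apply: Lv_add; apply: Lv_mul => //; try apply: Lv_vz.
  by apply: Lv_add; apply: Lv_vz.
rewrite !brn br1E in H *.
have E : v ^ (- (2 * n%:Z)) = ((v ^+ n) ^+ 2)^-1.
  rewrite vN -PoszM -exprnP mulnC exprM. reflexivity.
rewrite E vN !expr1z [v ^+ n.+1]exprS.
change (v ^ 2) with (v ^+ 2).
have hw : v ^+ n != 0 by rewrite expf_neq0 // v_neq0.
exact: (gstep hw v_neq0 H).
Qed.

Lemma brG (j : int) : exists G, laurent_v intC G /\ br (2 * j) = br 1 * G.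
Proof.
case: j => n; first exact: brG_nat.
have [G [HG H]] := brG_nat n.+1.
exists (- G); split; first exact: Lv_opp.
rewrite NegzE mulrN mulrN -H /br opprK; by rewrite opprB.
Qed.

Lemma br1_neq0 : v - v^-1 != 0.
Proof.
apply/eqP => E.
have E2 : v ^+ 2 = 1.
  by move/eqP: E; rewrite subr_eq0 => /eqP E; rewrite expr2 {2}E divff // v_neq0.
move: E2; rewrite /v /x8 -exprM -tofracXn -tofrac1 => /eqP; rewrite tofrac_eq => /eqP E3.
by move: (congr1 (fun p : {poly algC} => size p) E3); rewrite /= size_polyXn size_poly1.
Qed.

Lemma p1gen {F : fieldType} {a b c w g : F} : w != 0 -> c != 0 -> b != 0 -> a != 0 -> w - w^-1 != 0 ->
  b ^+ 2 - (b ^+ 2)^-1 = (w - w^-1) * g ->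
  (a / b / c - a^-1 * b * c) *
  (a / b * c - a^-1 * b / c) -
  (a * b / c - a^-1 / b * c) *
  (a * b * c - a^-1 / b / c) -
  2 * ((w - w^-1) * g) * (a - a^-1) * (a / w - a^-1 * w) /
  (w - w^-1) = (a - a^-1) ^+ 2 * ((- w - w^-1) * g).
Proof.
move=> hw hc hb ha h1 hg.
have -> : g = (b ^+ 2 - (b ^+ 2)^-1) / (w - w^-1) by rewrite hg mulrC mulKf.
have h2 : w * w - 1 != 0 by rewrite -(mulVf hw) -mulrBl mulf_neq0.
field. by rewrite hw h2 hb ha hc.
Qed.

Lemma part1 N j k : exists g, laurent_v intC g /\
  AA (N - j) k - AA (N + j) k - 2 * br (2 * j) * br N * br (N - 1) / br 1 = br N ^+ 2 * g.
Proof.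
have [G [HG H]] := brG j.
exists (- (v ^ 1 + v ^ (-1)) * G); split.
  apply: Lv_mul => //; apply: Lv_opp; apply: Lv_add; apply: Lv_vz.
have hg : (v ^ j) ^+ 2 - ((v ^ j) ^+ 2)^-1 = (v - v^-1) * G.
  move: H; rewrite /br vN expr1z vN mulrC -exprz_exp => <-; reflexivity.
rewrite H /AA /br !opprD !opprK !vD !vN !expr1z.
exact: (p1gen v_neq0 (vz_neq0 k) (vz_neq0 j) (vz_neq0 N) br1_neq0 hg).
Qed.

Lemma half_ratC : ((2 : algC)^-1) \in ratC.
Proof. have := Crat_rat (2^-1). by rewrite fmorphV rmorph_nat. Qed.

Lemma half_K : (tofrac (((2 : algC)^-1)%:P) : K) = 2^-1.
Proof.
have two0 : (2 : algC) != 0 by rewrite pnatr_eq0.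
have E : (tofrac (((2 : algC)^-1)%:P) : K) * 2 = 1.
  have -> : (2 : K) = tofrac ((2 : algC)%:P) by rewrite polyCD polyC1 tofracD tofrac1.
  by rewrite -tofracM -polyCM mulVf // polyC1 tofrac1.
have h2 : (2 : K) != 0 by apply/eqP => e; move: E; rewrite e mulr0 => /eqP; rewrite eq_sym oner_eq0.
by rewrite -[LHS](mulfK h2) E div1r.
Qed.

Lemma Lv_half : laurent_v ratC (2^-1 : K).
Proof. rewrite -half_K; apply: Lv_const; exact: half_ratC. Qed.

Lemma Lv_nat (S : subringClosed algC) n : Lv S (n%:R : K).
Proof. elim: n => [|n IH]; first exact: Lv0. rewrite mulrS; apply: Lv_add => //; exact: Lv1. Qed.

Lemma qstep {F : fieldType} {z Q : F} (M : nat) : z != 0 -> (2 : F) != 0 ->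
  z ^+ M = 1 + M%:R / 2 * (z - z^-1) + (1 - z^-1) ^+ 2 * Q ->
  z ^+ M.+1 = 1 + M.+1%:R / 2 * (z - z^-1) + (1 - z^-1) ^+ 2 * (z * Q + z * (M%:R * z + M%:R + 1) * 2^-1).
Proof.
move=> hz h2 H; rewrite exprS H.
have -> : (M.+1%:R : F) = M%:R + 1 by rewrite mulrSr.
move: (M%:R : F) => c.
field. by rewrite hz h2.
Qed.

Lemma two_neq0K : (2 : K) != 0.
Proof. by rewrite -[2 : K]invrK -half_K invr_eq0 tofrac_eq0 polyC_eq0 invr_eq0 pnatr_eq0. Qed.

Lemma zlemma_nat {z : K} : z != 0 -> laurent_v ratC z -> forall M : nat,
  exists Q, laurent_v ratC Q /\ z ^+ M = 1 + M%:R / 2 * (z - z^-1) + (1 - z^-1) ^+ 2 * Q.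
Proof.
move=> hz Lz; elim=> [|M [Q [LQ H]]].
  exists 0; split; first exact: Lv0.
  by rewrite expr0 !mul0r mulr0 !addr0.
exists (z * Q + z * (M%:R * z + M%:R + 1) * 2^-1); split.
  apply: Lv_add; apply: Lv_mul => //; first apply: Lv_mul => //.
    apply: Lv_add; [apply: Lv_add; [apply: Lv_mul => //; exact: Lv_nat | exact: Lv_nat] | exact: Lv1].
  exact: Lv_half.
exact: (qstep M hz two_neq0K H).
Qed.

Lemma negid {F : fieldType} {z Q y c : F} : z != 0 ->
  y = 1 + c * (z^-1 - z^-1^-1) + (1 - z^-1^-1) ^+ 2 * Q ->
  y = 1 + (- c) * (z - z^-1) + (1 - z^-1) ^+ 2 * (z ^+ 2 * Q).
Proof. move=> hz ->. rewrite invrK. field. exact: hz. Qed.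

Lemma zlemma_int (z : K) (M : int) : z != 0 -> laurent_v ratC z -> laurent_v ratC z^-1 ->
  exists Q, laurent_v ratC Q /\ z ^ M = 1 + M%:~R / 2 * (z - z^-1) + (1 - z^-1) ^+ 2 * Q.
Proof.
move=> hz Lz Lzi; case: M => n; first exact: zlemma_nat.
have hzi : z^-1 != 0 by rewrite invr_eq0.
have [Q [LQ H]] := zlemma_nat hzi Lzi n.+1.
exists (z ^+ 2 * Q); split.
  by apply: Lv_mul => //; rewrite expr2; apply: Lv_mul.
rewrite NegzE -exprz_inv intrN mulNr.
exact: (negid hz H).
Qed.

Local Notation II := (tofrac (('i : algC)%:P) : K).

Lemma I_sq : II ^+ 2 = -1.
Proof. by rewrite -tofracXn -polyC_exp sqrCi polyCN polyC1 tofracN tofrac1. Qed.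

Lemma I_neq0 : II != 0.
Proof. apply/eqP => e; move: I_sq; rewrite e expr0n /= => /eqP; rewrite eq_sym oppr_eq0 oner_eq0. by []. Qed.

Lemma tt_rel N j : tt (- j) N = tt j N * (- v ^ (- N)) ^ j.
Proof.
rewrite /tt.
have e1 : N - 1 - - j = (N - 1 - j) + 2 * j by ring.
have e2 : (N + - j) ^+ 2 = (N + j) ^+ 2 + 4 * (- N * j) by ring.
have e3 : II ^ (2 * j) = (-1) ^ j by rewrite -exprz_exp; exact: (congr1 (fun t => t ^ j) I_sq).
have e4 : x8 ^ (4 * (- N * j)) = v ^ (- N * j) by rewrite -exprz_exp.
rewrite e1 e2 (expfzDr _ _ I_neq0) (expfzDr _ _ x8_neq0) e3 e4.
by rewrite -[- v ^ (- N)]mulN1r [(-1 * _) ^ j]expfzMl exprz_exp mulrACA.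
Qed.

Lemma fin {R : comNzRingType} (T c B E Q : R) : T * (1 + c * B + E * Q) = T + c * T * B + T * E * Q.
Proof. ring. Qed.

Lemma part3 N j m : exists Q : K, laurent_v ratC Q /\
         tt (- j) N ^ m = tt j N ^ m + (m * j)%:~R / 2 * tt j N ^ m * br N
                          + tt j N ^ m * (v ^ N + 1) ^+ 2 * Q.
Proof.
set z := - v ^ (- N).
have zi : z^-1 = - v ^ N by rewrite /z invrN vN invrK.
have hz : z != 0 by rewrite /z oppr_eq0 vz_neq0.
have Lz : laurent_v ratC z by apply: Lv_opp; apply: Lv_vz.
have Lzi : laurent_v ratC z^-1 by rewrite zi; apply: Lv_opp; apply: Lv_vz.
have [Q [LQ HQ]] := zlemma_int z (j * m) hz Lz Lzi.
exists Q; split => //.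
have ez1 : z - z^-1 = br N by rewrite zi /br /z opprK addrC.
have ez2 : 1 - z^-1 = v ^ N + 1 by rewrite zi opprK addrC.
rewrite tt_rel -/z expfzMl exprz_exp HQ ez1 ez2 (mulrC j m).
exact: fin.
Qed.

Theorem lemma2p1 (N j k m : int) :
  [/\ (exists g : K, laurent_v intC g /\
         AA (N - j) k - AA (N + j) k - 2 * br (2 * j) * br N * br (N - 1) / br 1
         = br N ^+ 2 * g),
      br (N - j) = - br (N + j) + br N * (v ^ j + v ^ (- j)) &
      (exists Q : K, laurent_v ratC Q /\
         tt (- j) N ^ m = tt j N ^ m + (m * j)%:~R / 2 * tt j N ^ m * br N
                          + tt j N ^ m * (v ^ N + 1) ^+ 2 * Q)].
Proof.
split; [exact: part1 | exact: part2 | exact: part3].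
Qed.
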